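(* Let $G=Z_{2^{\lambda_1}}\times\cdots\times Z_{2^{\lambda_n}}$ with $\lambda_1\le\cdots\le\lambda_n$. The lattice of characteristic subgroups of $G$ is distributive if and only if every characteristic subgroup of $G$ is regular.
   Context: Tuples are ordered componentwise; for $\mathbf a$ with $\mathbf 0\le\mathbf a\le(\lambda_1,\dots,\lambda_n)$, $T(\mathbf a)$ is the set of $(g_1,\dots,g_n)\in G$ with $|g_i|=2^{a_i}$ for all $i$, and $R(\mathbf a)=\bigcup_{\mathbf b\le\mathbf a}T(\mathbf b)$. A subgroup is regular if it equals $R(\mathbf a)$ for some such tuple $\mathbf a$. *)

(* Defs.v *)
From mathcomp Require Import all_boot all_algebra all_fingroup.
Set Implicit Arguments.
Unset Strict Implicit.
Unset Printing Implicit Defensive.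

(* Ambient group: V = 'rV['Z_(2^M)]_n (additive group of row vectors),
   with M = (max_i lam i).+1 >= 1 (so 'Z_(2^M) really is Z/2^M).
   Coordinate i of G is the (unique) cyclic subgroup of order 2^(lam i) of
   'Z_(2^M), namely the multiples of 2^(M - lam i). *)

Definition bigM (n : nat) (lam : 'I_n -> nat) : nat := (\max_(i < n) lam i).+1.

Definition Amb (n : nat) (lam : 'I_n -> nat) : finGroupType :=
  'rV['Z_(2 ^ bigM lam)]_n.

Definition coord (n : nat) (lam : 'I_n -> nat) (g : Amb lam) (i : 'I_n)
  : 'Z_(2 ^ bigM lam) := (g : 'rV_n) ord0 i.

Definition Gset (n : nat) (lam : 'I_n -> nat) : {set Amb lam} :=
  [set g : Amb lam | [forall i, 2 ^ (bigM lam - lam i) %| (coord g i : nat)]].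

Lemma Gset_group_set (n : nat) (lam : 'I_n -> nat) : group_set (Gset lam).
Proof.
apply/group_setP; split.
  by rewrite inE; apply/forallP => i; rewrite /coord mxE dvdn0.
move=> x y; rewrite !inE => /forallP Hx /forallP Hy; apply/forallP => i.
rewrite /coord.
have -> : ((x * y)%g : 'rV_n) = ((x : 'rV_n) + (y : 'rV_n))%R by [].
rewrite mxE /= /Zp_add /=.
set d := 2 ^ _.
have hd : d %| 2 ^ bigM lam by rewrite /d dvdn_exp2l // leq_subr.
have hm : (Zp_trunc (2 ^ bigM lam)).+2 = 2 ^ bigM lam.
  rewrite Zp_cast //.
  by rewrite /bigM expnS; case: (2 ^ _) (expn_gt0 2 (\max_(i < n) lam i)) => // k _; rewrite mul2n -addnn; case: k.
rewrite -hm in hd.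
by rewrite /dvdn (modn_dvdm _ hd) -/(dvdn _ _) dvdn_add ?Hx ?Hy.
Qed.

Canonical Ggroup (n : nat) (lam : 'I_n -> nat) := Group (Gset_group_set lam).

(* R(a) = union over b <= a of T(b), T(b) = { g in G | |g_i| = 2^(b_i) for all i }.
   Orders are taken in 'Z_(2^M), which coincide with the orders in the
   cyclic coordinate subgroup Z_{2^lam_i}. *)
Definition Tset (n : nat) (lam : 'I_n -> nat) (b : 'I_n -> nat) : {set Amb lam} :=
  [set g in Gset lam | [forall i, #[coord g i]%g == 2 ^ (b i)]].

Definition regular (n : nat) (lam : 'I_n -> nat) (H : {set Amb lam}) : Prop :=
  exists a : 'I_n -> nat, (forall i, a i <= lam i) /\
    (forall g, g \in H <-> exists2 b : 'I_n -> nat, (forall i, b i <= a i) & g \in Tset lam b).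
Arguments regular {n} lam H.

Definition char_lattice_distributive (gT : finGroupType) (G : {set gT}) : Prop :=
  forall H K L : {group gT},
    (H \char G)%g -> (K \char G)%g -> (L \char G)%g ->
    (H :&: (K <*> L))%g = ((H :&: K) <*> (H :&: L))%g.

(* Main.v *)
Require Import Defs.
From mathcomp Require Import all_boot all_algebra all_fingroup all_solvable.
From mathcomp Require Import zify.
Require Import Defs.
Set Implicit Arguments.
Unset Strict Implicit.
Unset Printing Implicit Defensive.
Import GRing.Theory.

Lemma pgt1 n (lam : 'I_n -> nat) : 1 < 2 ^ bigM lam.
Proof. rewrite /bigM expnS; have := expn_gt0 2 (\max_(i < n) lam i); lia. Qed.

Lemma lam_ltM n (lam : 'I_n -> nat) i : lam i < bigM lam.
Proof. by rewrite /bigM ltnS (leq_bigmax i). Qed.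

Lemma cardZ n (lam : 'I_n -> nat) : #|[set: 'Z_(2 ^ bigM lam)]| = 2 ^ bigM lam.
Proof. by rewrite cardsT card_ord Zp_cast // pgt1. Qed.

Definition lv n (lam : 'I_n -> nat) (y : 'Z_(2 ^ bigM lam)) := logn 2 #[y]%g.

Lemma ordZ_pow n (lam : 'I_n -> nat) (y : 'Z_(2 ^ bigM lam)) : #[y]%g = 2 ^ lv y.
Proof.
have := order_dvdG (in_setT y); rewrite cardZ.
case/dvdn_pfactor => // m _ E; rewrite /lv E pfactorK //; exact: E.
Qed.

Lemma lv_le n (lam : 'I_n -> nat) (y : 'Z_(2 ^ bigM lam)) b :
  (lv y <= b) = (y *+ 2 ^ b == 0)%R.
Proof. by rewrite -(dvdn_Pexp2l _ _ (ltnSn 1)) -ordZ_pow order_dvdn. Qed.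

Lemma lv_leM n (lam : 'I_n -> nat) (y : 'Z_(2 ^ bigM lam)) : lv y <= bigM lam.
Proof.
have H := order_dvdG (in_setT y); rewrite cardZ ordZ_pow in H.
by rewrite -(dvdn_Pexp2l _ _ (ltnSn 1)).
Qed.

Lemma mulrn_eq0Z n (lam : 'I_n -> nat) (y : 'Z_(2 ^ bigM lam)) N :
  (y *+ N == 0)%R = (2 ^ bigM lam %| nat_of_ord y * N).
Proof.
have E := Zp_cast (pgt1 lam).
by rewrite Zp_mulrn -val_eqE /= [X in _ %% X]E.
Qed.

Lemma lv_dvd n (lam : 'I_n -> nat) (y : 'Z_(2 ^ bigM lam)) b : b <= bigM lam ->
  (lv y <= b) = (2 ^ (bigM lam - b) %| nat_of_ord y).
Proof.
move=> hb; rewrite lv_le mulrn_eq0Z.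
have E : 2 ^ bigM lam = 2 ^ (bigM lam - b) * 2 ^ b by rewrite -expnD subnK.
by rewrite [X in X %| _]E dvdn_pmul2r // expn_gt0.
Qed.

Definition uu n (lam : 'I_n -> nat) k : 'Z_(2 ^ bigM lam) := (2 ^ (bigM lam - k))%:R%R.

Lemma lv_uu_le n (lam : 'I_n -> nat) k b : k <= bigM lam -> b <= bigM lam ->
  (lv (uu lam k) <= b) = (k <= b).
Proof.
move=> hk hb; rewrite lv_dvd // /uu val_Zp_nat ?pgt1 //.
case: k hk => [|k] hk; first by rewrite subn0 modnn dvdn0.
rewrite modn_small ?ltn_exp2l //; last by lia.
rewrite dvdn_Pexp2l //; lia.
Qed.

Lemma lv_uu n (lam : 'I_n -> nat) k : k <= bigM lam -> lv (uu lam k) = k.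
Proof.
move=> hk; apply/eqP; rewrite eqn_leq lv_uu_le // leqnn /=.
by rewrite -(@lv_uu_le _ lam) ?lv_leM.
Qed.

Lemma uu_mul n (lam : 'I_n -> nat) (y : 'Z_(2 ^ bigM lam)) b : b <= bigM lam ->
  lv y <= b -> y = (uu lam b *+ (nat_of_ord y %/ 2 ^ (bigM lam - b)))%R.
Proof.
move=> hb hy; rewrite /uu -mulrnA mulnC divnK ?natr_Zp //.
by rewrite -lv_dvd.
Qed.

Lemma cyc_mul n (lam : 'I_n -> nat) (y z : 'Z_(2 ^ bigM lam)) :
  lv z <= lv y -> exists t, z = (y *+ t)%R.
Proof.
move=> hzy.
have cyc : cyclic [set: 'Z_(2 ^ bigM lam)] by rewrite Zp_cycle cycle_cyclic.
have : (<[z]> \subset <[y]>)%g.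
  by rewrite -(cardSg_cyclic cyc) ?subsetT // -!orderE !ordZ_pow dvdn_Pexp2l.
by rewrite cycle_subG => /cycleP [t ->]; exists t.
Qed.

Lemma lv0 n (lam : 'I_n -> nat) b : lv (0 : 'Z_(2 ^ bigM lam))%R <= b.
Proof. by rewrite lv_le mul0rn. Qed.

Lemma lvD n (lam : 'I_n -> nat) (y z : 'Z_(2 ^ bigM lam)) b :
  lv y <= b -> lv z <= b -> lv (y + z)%R <= b.
Proof. by rewrite !lv_le mulrnDl => /eqP-> /eqP->; rewrite addr0. Qed.

Lemma lvN n (lam : 'I_n -> nat) (y : 'Z_(2 ^ bigM lam)) b :
  lv y <= b -> lv (- y)%R <= b.
Proof. by rewrite !lv_le mulNrn oppr_eq0. Qed.

Lemma lvX n (lam : 'I_n -> nat) (y : 'Z_(2 ^ bigM lam)) t b :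
  lv y <= b -> lv (y *+ t)%R <= b.
Proof. by rewrite !lv_le mulrnAC => /eqP->; rewrite mul0rn. Qed.

Lemma lvX2 n (lam : 'I_n -> nat) (y : 'Z_(2 ^ bigM lam)) e b :
  lv (y *+ 2 ^ e)%R <= b = (lv y <= e + b).
Proof. by rewrite !lv_le -mulrnA expnD. Qed.

Lemma coord_mul n (lam : 'I_n -> nat) (g h : Amb lam) i :
  coord (g * h)%g i = (coord g i + coord h i)%R.
Proof.
rewrite /coord; have -> : ((g * h)%g : 'rV_n) = ((g : 'rV_n) + (h : 'rV_n))%R by [].
by rewrite mxE.
Qed.

Lemma coord_1 n (lam : 'I_n -> nat) i : coord (1%g : Amb lam) i = 0%R.
Proof. by rewrite /coord; have -> : ((1%g : Amb lam) : 'rV_n) = 0%R by []; rewrite mxE. Qed.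

Lemma coord_X n (lam : 'I_n -> nat) (g : Amb lam) t i :
  coord (g ^+ t)%g i = (coord g i *+ t)%R.
Proof.
elim: t => [|t IH]; first by rewrite expg0 coord_1 mulr0n.
by rewrite expgS coord_mul IH mulrS.
Qed.

Lemma coord_V n (lam : 'I_n -> nat) (g : Amb lam) i :
  coord (g^-1)%g i = (- coord g i)%R.
Proof.
apply/eqP; rewrite -subr_eq0 opprK addrC -coord_mul mulgV coord_1 //.
Qed.

Lemma vecP n (lam : 'I_n -> nat) (g h : Amb lam) :
  (forall i, coord g i = coord h i) -> g = h.
Proof. by move=> E; apply/rowP => i; exact: E i. Qed.

Definition ev n (lam : 'I_n -> nat) (i : 'I_n) (y : 'Z_(2 ^ bigM lam)) : Amb lam :=
  (\row_j (if j == i then y else 0))%R.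

Lemma coord_ev n (lam : 'I_n -> nat) (i : 'I_n) (y : 'Z_(2 ^ bigM lam)) j :
  coord (ev i y) j = if j == i then y else 0%R.
Proof. by rewrite /coord /ev mxE. Qed.

Lemma ev_add n (lam : 'I_n -> nat) i (y z : 'Z_(2 ^ bigM lam)) :
  ev i (y + z)%R = (ev i y * ev i z)%g.
Proof.
apply: vecP => j; rewrite coord_mul !coord_ev; case: (j == i) => //; by rewrite addr0.
Qed.

Lemma ev_X n (lam : 'I_n -> nat) i (y : 'Z_(2 ^ bigM lam)) t :
  ev i (y *+ t)%R = (ev i y ^+ t)%g.
Proof.
apply: vecP => j; rewrite coord_X !coord_ev; case: (j == i) => //; by rewrite mul0rn.
Qed.

Lemma coord_prod n (lam : 'I_n -> nat) (F : 'I_n -> Amb lam) j :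
  coord (\prod_(i < n) F i)%g j = (\sum_(i < n) coord (F i) j)%R.
Proof.
apply: (big_morph (fun g => coord g j)) => [g h|]; [exact: coord_mul | exact: coord_1].
Qed.

Lemma decomp n (lam : 'I_n -> nat) (g : Amb lam) :
  g = (\prod_(i < n) ev i (coord g i))%g.
Proof.
apply: vecP => j; rewrite coord_prod (bigD1 j) //= coord_ev eqxx big1 ?addr0 //.
by move=> i /negbTE ij; rewrite coord_ev eq_sym ij.
Qed.

Definition Rset n (lam : 'I_n -> nat) (b : 'I_n -> nat) : {set Amb lam} :=
  [set g : Amb lam | [forall i, lv (coord g i) <= b i]].

Lemma RsetP n (lam : 'I_n -> nat) b (g : Amb lam) :
  reflect (forall i, lv (coord g i) <= b i) (g \in Rset lam b).
Proof. by rewrite inE; apply: forallP. Qed.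

Lemma Rset_group n (lam : 'I_n -> nat) b : group_set (Rset lam b).
Proof.
apply/group_setP; split; first by apply/RsetP => i; rewrite coord_1 lv0.
move=> g h /RsetP Hg /RsetP Hh; apply/RsetP => i; rewrite coord_mul; exact: lvD.
Qed.

Canonical Rgroup n (lam : 'I_n -> nat) b := Group (Rset_group lam b).

Lemma Gset_R n (lam : 'I_n -> nat) : Gset lam = Rset lam lam.
Proof.
apply/setP => g; rewrite !inE; apply: eq_forallb => i.
by rewrite lv_dvd // ltnW // lam_ltM.
Qed.

Lemma Rset_mono n (lam : 'I_n -> nat) b b' :
  (forall i, b i <= b' i) -> Rset lam b \subset Rset lam b'.
Proof.
move=> le; apply/subsetP => g /RsetP H; apply/RsetP => i; exact: leq_trans (H i) (le i).
Qed.

Lemma Rset_sub n (lam : 'I_n -> nat) b :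
  (forall i, b i <= lam i) -> Rset lam b \subset Gset lam.
Proof. by rewrite Gset_R; apply: Rset_mono. Qed.

Lemma coord_prod_ev n (lam : 'I_n -> nat) (F : 'I_n -> 'Z_(2 ^ bigM lam)) j :
  coord (\prod_(i < n) ev i (F i))%g j = F j.
Proof.
rewrite coord_prod (bigD1 j) //= coord_ev eqxx big1 ?addr0 //.
by move=> i /negbTE ij; rewrite coord_ev eq_sym ij.
Qed.

Lemma regular_R n (lam : 'I_n -> nat) (H : {set Amb lam}) :
  regular lam H <-> exists a, (forall i, a i <= lam i) /\ (forall g, (g \in H) = (g \in Rset lam a)).
Proof.
split.
  move=> [a [ale HP]]; exists a; split => // g; apply/idP/idP.
    case/HP => b ble; rewrite inE => /andP [_ /forallP Hb]; apply/RsetP => i.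
    by rewrite /lv (eqP (Hb i)) pfactorK // ble.
  move=> gR; apply/HP; exists (fun i => lv (coord g i)); first exact/RsetP.
  rewrite inE (subsetP (Rset_sub ale)) //=; apply/forallP => i.
  by rewrite ordZ_pow.
move=> [a [ale HP]]; exists a; split => // g; rewrite HP; split.
  move=> gR; exists (fun i => lv (coord g i)); first exact/RsetP.
  rewrite inE (subsetP (Rset_sub ale)) //=; apply/forallP => i.
  by rewrite ordZ_pow.
case=> b ble; rewrite inE => /andP [_ /forallP Hb]; apply/RsetP => i.
by rewrite /lv (eqP (Hb i)) pfactorK // ble.
Qed.

Lemma dist_R n (lam : 'I_n -> nat) (H K L : {group Amb lam}) a b c :
  (forall g, (g \in H) = (g \in Rset lam a)) ->
  (forall g, (g \in K) = (g \in Rset lam b)) ->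
  (forall g, (g \in L) = (g \in Rset lam c)) ->
  (H :&: (K <*> L))%g = ((H :&: K) <*> (H :&: L))%g.
Proof.
move=> HH HK HL; apply/eqP; rewrite eqEsubset; apply/andP; split; last first.
  rewrite join_subG !subsetI subsetIl subsetIl /=.
  rewrite (subset_trans (subsetIr _ _) (joing_subl _ _)).
  by rewrite (subset_trans (subsetIr _ _) (joing_subr _ _)).
apply/subsetP => g; rewrite inE => /andP [gH gKL].
have sKL : (K <*> L \subset Rset lam (fun i => maxn (b i) (c i)))%g.
  rewrite join_subG; apply/andP; split; apply/subsetP => x.
    by rewrite HK => /RsetP Hx; apply/RsetP => i; rewrite leq_max Hx.
  by rewrite HL => /RsetP Hx; apply/RsetP => i; rewrite leq_max Hx orbT.
move: (subsetP sKL g gKL) => /RsetP gM.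
move: gH; rewrite HH => /RsetP ga.
set k := (\prod_(i < n) ev i (if c i <= b i then coord g i else 0%R))%g.
set l := (\prod_(i < n) ev i (if c i <= b i then 0%R else coord g i))%g.
have -> : g = (k * l)%g.
  apply: vecP => j; rewrite coord_mul !coord_prod_ev.
  by case: (c j <= b j); rewrite ?addr0 ?add0r.
apply: groupM; apply: mem_gen; rewrite inE.
  apply/orP; left; rewrite inE HH HK; apply/andP; split; apply/RsetP => i;
    rewrite coord_prod_ev; case: ifP => cb; rewrite ?lv0 //.
  by have := gM i; rewrite (maxn_idPl cb).
apply/orP; right; rewrite inE HH HL; apply/andP; split; apply/RsetP => i;
  rewrite coord_prod_ev; case: ifP => cb; rewrite ?lv0 //.
have := gM i; rewrite (maxn_idPr _) //; lia.
Qed.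

Lemma pow_lv n (lam : 'I_n -> nat) (v : Amb lam) e i :
  (v ^+ (2 ^ e)%N)%g = 1%g -> lv (coord v i) <= e.
Proof. by move=> E; rewrite lv_le -coord_X E coord_1. Qed.

Lemma lv_pow n (lam : 'I_n -> nat) (v : Amb lam) e :
  (forall i, lv (coord v i) <= e) -> (v ^+ (2 ^ e)%N)%g = 1%g.
Proof.
move=> H; apply: vecP => i; rewrite coord_X coord_1; apply/eqP; rewrite -lv_le; exact: H.
Qed.

Lemma mem_ev_R n (lam : 'I_n -> nat) b i (y : 'Z_(2 ^ bigM lam)) :
  lv y <= b i -> ev i y \in Rset lam b.
Proof.
by move=> hy; apply/RsetP => j; rewrite coord_ev; case: eqP => [->|] //; rewrite lv0.
Qed.

Lemma uu_scale n (lam : 'I_n -> nat) b l : b <= l -> l <= bigM lam ->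
  uu lam b = (uu lam l *+ 2 ^ (l - b))%R.
Proof.
move=> hb hl; rewrite /uu -mulrnA -expnD; congr (_ %:R)%R; congr (2 ^ _); lia.
Qed.

Lemma Rset_char n (lam : 'I_n -> nat) b :
  (forall i, b i <= lam i) ->
  (forall i l, i != l -> b l <= b i \/ b l + lam i <= b i + lam l) ->
  (Rset lam b \char Gset lam)%g.
Proof.
move=> ble Cond.
apply/(charP (Rgroup lam b) (Ggroup lam)); split; first exact: Rset_sub.
move=> f injf fG.
have sRG := Rset_sub ble.
have sub : (f @* Rset lam b \subset Rset lam b)%g.
  apply/subsetP => y /morphimP [x xG xR ->].
  have xG' : x \in Gset lam := xG.
  move/RsetP: (xR) => xb.
  rewrite (decomp x) morph_prod; last first.
    move=> l _; change (ev l (coord x l) \in Gset lam).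
    rewrite Gset_R; apply: mem_ev_R; move: xG'; rewrite Gset_R => /RsetP; exact.
  apply/RsetP => i; rewrite coord_prod.
  apply: (big_ind (fun z => lv z <= b i)); [exact: lv0 | by move=> ? ? ? ?; apply: lvD |] => l _.
  have evG : forall k z, lv z <= lam k -> ev k z \in Ggroup lam.
    by move=> k z hz; change (ev k z \in Gset lam); rewrite Gset_R; apply: mem_ev_R.
  have hxl : lv (coord x l) <= b l := xb l.
  have hblM : b l <= bigM lam by rewrite ltnW // (leq_ltn_trans (ble l)) // lam_ltM.
  case: (eqVneq i l) => [<-|nil].
    have eG : ev i (coord x i) \in Ggroup lam by apply: evG; exact: leq_trans (xb i) (ble i).
    apply: pow_lv; rewrite -morphX //.
    by rewrite -ev_X; move: (xb i); rewrite lv_le => /eqP ->; rewrite -(morph1 f); congr (f _);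
      apply: vecP => j; rewrite coord_ev coord_1; case: eqP.
  have hlM : lam l <= bigM lam := ltnW (lam_ltM lam l).
  rewrite (uu_mul hblM hxl) (uu_scale (ble l) hlM) -mulrnA ev_X.
  have EG : ev l (uu lam (lam l)) \in Ggroup lam by apply: evG; rewrite lv_uu.
  rewrite morphX // coord_X mulrnA; apply: lvX; rewrite lvX2.
  set yy := coord _ i.
  have h1 : lv yy <= lam i.
    have := mem_morphim f EG EG; rewrite fG => hh.
    have : f (ev l (uu lam (lam l))) \in Gset lam := hh.
    by rewrite Gset_R => /RsetP; apply.
  have h2 : lv yy <= lam l.
    apply: pow_lv; rewrite -morphX // -ev_X.
    have -> : (uu lam (lam l) *+ 2 ^ lam l)%R = 0%R.
      by apply/eqP; rewrite -lv_le lv_uu.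
    by rewrite -(morph1 f); congr (f _); apply: vecP => j; rewrite coord_ev coord_1; case: eqP.
  case: (Cond i l nil) => hc; lia.
by apply/eqP; rewrite eqEcard sub (card_injm injf sRG) leqnn.
Qed.

Lemma transv n (lam : 'I_n -> nat) (H : {group Amb lam}) (g : Amb lam) l i :
  (H \char Gset lam)%g -> g \in H -> l != i ->
  ev i (coord g l *+ 2 ^ (lam l - lam i))%R \in H.
Proof.
move=> chH gH li.
set s := 2 ^ (lam l - lam i).
pose tau (v : Amb lam) : Amb lam := (v * ev i (coord v l *+ s)%R)%g.
have tauM : {in Ggroup lam &, {morph tau : x y / x * y}}%g.
  move=> v w _ _; apply: vecP => j; rewrite /tau !(coord_mul, coord_ev).
  by case: (j == i); [rewrite mulrnDl addrACA | rewrite !addr0].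
pose f := Morphism tauM.
have tl : forall v, coord (tau v) l = coord v l.
  by move=> v; rewrite /tau coord_mul coord_ev (negbTE li) addr0.
have injf : ('injm f)%g.
  apply/injmP => v w _ _ E.
  have El : coord v l = coord w l by rewrite -tl -[RHS]tl; congr coord.
  apply: vecP => j; have := congr1 (fun x => coord x j) E.
  by rewrite /= /tau !coord_mul !coord_ev El => /addIr.
have fG : (f @* Ggroup lam)%g = Ggroup lam.
  apply/eqP; rewrite eqEcard (card_injm injf (subxx _)) leqnn andbT.
  apply/subsetP => y /morphimP [v vG _ ->] /=.
  apply: groupM => //; change (ev i (coord v l *+ s)%R \in Gset lam).
  rewrite Gset_R; apply: mem_ev_R; rewrite lvX2.
  have : v \in Gset lam := vG.
  by rewrite Gset_R => /RsetP /(_ l) hv; lia.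
case/charP: chH => sHG /(_ f injf fG) fH.
have gG : g \in Ggroup lam := subsetP sHG g gH.
have := mem_morphim f gG gH; rewrite fH => tg.
have -> : ev i (coord g l *+ s)%R = (g^-1 * tau g)%g by rewrite /tau mulKg.
by rewrite groupM ?groupV.
Qed.

Definition cc n (lam : 'I_n -> nat) (H : {set Amb lam}) (i : 'I_n) : nat :=
  \max_(k < (lam i).+1 | ev i (uu lam k) \in H) k.

Lemma cc_le n (lam : 'I_n -> nat) (H : {set Amb lam}) i : cc H i <= lam i.
Proof. by apply/bigmax_leqP => k _; rewrite -ltnS; exact: ltn_ord. Qed.

Lemma cc_max n (lam : 'I_n -> nat) (H : {set Amb lam}) i k :
  k <= lam i -> ev i (uu lam k) \in H -> k <= cc H i.
Proof.
move=> hk hH; rewrite -ltnS in hk.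
exact: (@leq_bigmax_cond _ (fun k : 'I_(lam i).+1 => ev i (uu lam k) \in H)
   (fun k => nat_of_ord k) (Ordinal hk)).
Qed.

Lemma ev0 n (lam : 'I_n -> nat) i : ev i (0 : 'Z_(2 ^ bigM lam))%R = 1%g.
Proof. by apply: vecP => j; rewrite coord_ev coord_1; case: eqP. Qed.

Lemma uu0 n (lam : 'I_n -> nat) : uu lam 0 = 0%R.
Proof.
have := @lv_uu_le _ lam 0 0 (leq0n _) (leq0n _).
by rewrite leqnn lv_le expn0 mulr1n => /eqP.
Qed.

Lemma cc_mem n (lam : 'I_n -> nat) (H : {group Amb lam}) i :
  ev i (uu lam (cc H i)) \in H.
Proof.
have : 0 < #|(fun k : 'I_(lam i).+1 => ev i (uu lam k) \in H)|.
  have h0 : ev i (uu lam 0) \in H by rewrite uu0 ev0 group1.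
  by apply/card_gt0P; exists ord0; exact: h0.
case/(eq_bigmax_cond (fun k => nat_of_ord k)) => k0 Pk0 E.
by rewrite /cc E.
Qed.

Lemma cc3 n (lam : 'I_n -> nat) (H : {group Amb lam}) i (y : 'Z_(2 ^ bigM lam)) :
  lv y <= cc H i -> ev i y \in H.
Proof.
move=> hy.
have cM : cc H i <= bigM lam := ltnW (leq_ltn_trans (cc_le H i) (lam_ltM lam i)).
by rewrite (uu_mul cM hy) ev_X groupX // cc_mem.
Qed.

Lemma cc4 n (lam : 'I_n -> nat) (H : {group Amb lam}) i (y : 'Z_(2 ^ bigM lam)) :
  ev i y \in H -> lv y <= lam i -> lv y <= cc H i.
Proof.
move=> hH hy.
have [t E] := @cyc_mul _ lam y (uu lam (lv y)) (eq_leq (lv_uu (lv_leM y))).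
by apply: cc_max => //; rewrite E ev_X groupX.
Qed.

Lemma condH n (lam : 'I_n -> nat) (H : {group Amb lam}) (g : Amb lam) i l :
  (H \char Gset lam)%g -> g \in H -> i != l ->
  lv (coord g l) <= cc H i \/ lv (coord g l) + lam i <= cc H i + lam l.
Proof.
move=> chH gH il.
have gG : g \in Gset lam := subsetP (char_sub chH) g gH.
move: gG; rewrite Gset_R => /RsetP /(_ l) gl.
have li : l != i by rewrite eq_sym.
have := transv chH gH li => /cc4.
rewrite !lvX2 => /(_ ltac:(lia)) h; lia.
Qed.

Lemma b_char n (lam : 'I_n -> nat) (H : {group Amb lam}) (h : Amb lam) b :
  (H \char Gset lam)%g -> h \in H ->
  (forall i, b i = cc H i \/ b i = lv (coord h i)) ->
  (forall i, cc H i <= b i) -> (forall i, b i <= lam i) ->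
  (Rset lam b \char Gset lam)%g.
Proof.
move=> chH hH bdef cb ble; apply: Rset_char => // i l il.
have := cb i; case: (bdef l) => ->.
  have := condH chH (cc_mem H l) il.
  rewrite coord_ev eqxx lv_uu; last exact: ltnW (leq_ltn_trans (cc_le H l) (lam_ltM lam l)).
  move=> h1 h2; lia.
have := condH chH hH il => h1 h2; lia.
Qed.

Lemma hard n (lam : 'I_n -> nat) (H : {group Amb lam}) :
  char_lattice_distributive (Gset lam) -> (H \char Gset lam)%g -> regular lam H.
Proof.
move=> dist chH.
set c := cc H.
have sHG := char_sub chH.
have Rc_sub : Rset lam c \subset H.
  apply/subsetP => g /RsetP gc; rewrite (decomp g); apply: group_prod => i _.
  exact: cc3 (gc i).
apply/regular_R; exists c; split; first exact: cc_le.
move=> g; apply/idP/idP; last exact: (subsetP Rc_sub).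
move=> gH; apply/negPn/negP => gNR.
pose S (x : Amb lam) := [set i | ~~ (lv (coord x i) <= c i)].
pose bad (x : Amb lam) := (x \in H) && (x \notin Rset lam c).
have badg : bad g by rewrite /bad gH gNR.
case: (arg_minnP (fun x => #|S x|) badg) => h /andP [hH hNR] hmin.
have SP : forall x i, (i \in S x) = ~~ (lv (coord x i) <= c i) by move=> x i; rewrite inE.
have : S h != set0.
  apply: contra hNR => /eqP E; apply/RsetP => i; apply/negPn/negP => hi.
  have : i \in S h by rewrite SP.
  by rewrite E inE.
case/set0Pn => j jS.
have hG : h \in Gset lam := subsetP sHG h hH.
set w := (h * (ev j (coord h j))^-1)%g.
have cw : forall i, coord w i = if i == j then 0%R else coord h i.
  move=> i; rewrite /w coord_mul coord_V coord_ev.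
  by case: eqP => [->|]; rewrite ?subrr ?oppr0 ?addr0.
case: (boolP [exists k in S h, k != j]) => [/exists_inP [k kS kj] | none]; last first.
  have wR : w \in Rset lam c.
    apply/RsetP => i; rewrite cw; case: eqP => [_|/eqP ij]; first exact: lv0.
    move/exists_inPn: none => /(_ i); rewrite SP ij => hh.
    exact: contraLR hh isT.
  have : ev j (coord h j) \in H.
    have -> : ev j (coord h j) = (w^-1 * h)%g by rewrite /w invMg invgK mulgKV.
    by rewrite groupM ?groupV // (subsetP Rc_sub).
  move/cc4; move: hG; rewrite Gset_R => /RsetP /(_ j) hj /(_ hj).
  by move: jS; rewrite SP => /negP.
pose bx i := if i == j then lv (coord h j) else c i.
pose bz i := if (i \in S h) && (i != j) then lv (coord h i) else c i.
have hG' : forall i, lv (coord h i) <= lam i by move: hG; rewrite Gset_R => /RsetP.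
have ScH : forall i, i \in S h -> c i <= lv (coord h i).
  by move=> i; rewrite SP -ltnNge => /ltnW.
have chX : (Rset lam bx \char Gset lam)%g.
  apply: (b_char chH hH) => i; rewrite /bx; case: eqP => [->|_].
  - by right.
  - by left.
  - exact: ScH.
  - exact: leqnn.
  - exact: hG'.
  - exact: cc_le.
have chZ : (Rset lam bz \char Gset lam)%g.
  apply: (b_char chH hH) => i; rewrite /bz; case: ifP => [/andP [iS _]|_].
  - by right.
  - by left.
  - exact: ScH.
  - exact: leqnn.
  - exact: hG'.
  - exact: cc_le.
have E := dist (Rgroup lam bz) (Rgroup lam bx) H chZ chX chH.
have wL : w \in (Rset lam bz :&: (Rset lam bx <*> H))%g.
  rewrite inE; apply/andP; split.
    apply/RsetP => i; rewrite cw /bz; case: eqP => [_|/eqP ij]; first exact: lv0.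
    rewrite /= andbT; case: ifP => // iS.
    by move: (iS); rewrite SP => /negbFE.
  apply: groupM; first exact: (subsetP (joing_subr _ _)).
  rewrite groupV; apply: (subsetP (joing_subl _ _)); apply: mem_ev_R.
  by rewrite /bx eqxx.
have sub : ((Rset lam bz :&: Rset lam bx) <*> (Rset lam bz :&: H) \subset Rset lam c)%g.
  rewrite join_subG; apply/andP; split; apply/subsetP => x /setIP [xZ xX].
    apply/RsetP => i; move/RsetP: xZ => /(_ i); move/RsetP: xX => /(_ i).
    rewrite /bx /bz; case: eqP => [_ _|_ hh _ //]; by rewrite andbF.
  apply/negPn/negP => xNR.
  have := hmin x; rewrite /bad xX xNR => /(_ isT) hle.
  have : S x \subset S h :\ j.
    apply/subsetP => i; rewrite SP => hi; move/RsetP: xZ => /(_ i); rewrite /bz.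
    case: ifP => [/andP [iS ij] _ | _ hb]; first by rewrite in_setD1 ij iS.
    by rewrite hb in hi.
  move/subset_leq_card => h2; move: hle; rewrite (cardsD1 j (S h)) jS.
  by rewrite add1n ltnNge h2.
have : w \in Rset lam c by rewrite (subsetP sub) // -E.
move/RsetP => /(_ k); rewrite cw (negbTE kj).
by move: kS; rewrite SP => /negP.
Qed.

Theorem mainTheorem11 (n : nat) (lam : 'I_n -> nat)
  (lam_sorted : forall i j : 'I_n, (i <= j)%N -> (lam i <= lam j)%N) :
  char_lattice_distributive (Gset lam) <->
  (forall H : {group Amb lam}, (H \char Gset lam)%g -> regular lam H).
Proof.
split; first by move=> dist H chH; exact: hard.
move=> reg H K L chH chK chL.
case/regular_R: (reg H chH) => a [_ Ha].
case/regular_R: (reg K chK) => b [_ Hb].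
case/regular_R: (reg L chL) => c [_ Hc].
exact: dist_R Ha Hb Hc.
Qed.
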